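(* Let $\kappa>0$, $u_0>0$, and let $u=u(r;u_0)$ be the solution of $$\frac{d}{dr}\Big(\frac{u'}{\sqrt{1+u'^2}}\Big)=\kappa u,\qquad u(0)=u_0,\ u'(0)=0,$$ on its maximal interval $[0,R)$. Let $0<a\le R$ and $0\le\gamma<\pi/2$ be such that the surface $z=u(x)$ meets the vertical wall $x=a$ with contact angle $\gamma$, i.e. $\sin\psi(a)=\cos\gamma$ where $\sin\psi=u'/\sqrt{1+u'^2}$ (extended continuously to $r=a$). Then $$q:=u(a)-u(0)=\frac{\frac2\kappa(1-\sin\gamma)}{u_0+\sqrt{u_0^2+\frac2\kappa(1-\sin\gamma)}}<\sqrt{\frac2\kappa(1-\sin\gamma)}.$$
   Context: The function $u$ is the profile of a $\kappa$-cylindrical surface (capillary surface $z=u(x)$ translation invariant in $y$) over the strip $|x|<a$ between two vertical plates; $\psi$ is the inclination angle of the graph of $u$. On $[0,R)$, $u$ is increasing and $u'\to\infty$ as $r\to R$ (so $\gamma=0$ corresponds to $a=R$). *)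

(* Defs.v *)
From Stdlib Require Import Reals.
From Coquelicot Require Import Coquelicot.
Open Scope R_scope.

Definition sinpsi (du : R -> R) (r : R) : R := du r / sqrt (1 + du r ^ 2).

(* Main.v *)
Require Import Defs.
From Stdlib Require Import Reals Lra.
From Coquelicot Require Import Coquelicot.
Open Scope R_scope.

Lemma sp_facts (x : R) :
  0 < 1 - (x / sqrt (1 + x ^ 2)) ^ 2 /\
  sqrt (1 - (x / sqrt (1 + x ^ 2)) ^ 2) = / sqrt (1 + x ^ 2).
Proof.
  assert (Hp : 0 < 1 + x ^ 2) by nra.
  assert (Hw : 0 < sqrt (1 + x ^ 2)) by (apply sqrt_lt_R0; lra).
  assert (Hw2 : sqrt (1 + x ^ 2) ^ 2 = 1 + x ^ 2) by (apply pow2_sqrt; lra).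
  assert (E : 1 - (x / sqrt (1 + x ^ 2)) ^ 2 = (/ sqrt (1 + x ^ 2)) ^ 2).
  { unfold Rdiv. rewrite Rpow_mult_distr. rewrite pow_inv. rewrite Hw2. field. lra. }
  rewrite E. split.
  - apply pow_lt. apply Rinv_0_lt_compat; lra.
  - apply sqrt_pow2. left; apply Rinv_0_lt_compat; lra.
Qed.

Lemma lim_unique_const {F : (R -> Prop) -> Prop} {PF : ProperFilter F}
  (f : R -> R) K C : F (fun x => f x = K) -> filterlim f F (locally C) -> K = C.
Proof.
  intros HK HC. destruct (Req_dec K C) as [|n]; auto. exfalso.
  assert (e : 0 < Rabs (K - C)) by (apply Rabs_pos_lt; lra).
  apply filterlim_locally with (eps := mkposreal _ e) in HC.
  destruct (Hierarchy.filter_ex _ (filter_and _ _ HK HC)) as [x [h1 h2]].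
  revert h2; rewrite h1. unfold ball; simpl; unfold AbsRing_ball, abs, minus, plus, opp; simpl.
  unfold Rminus. lra.
Qed.

Lemma alg (u0 c : R) : 0 < u0 -> 0 <= c ->
  sqrt (u0 ^ 2 + c) - u0 = c / (u0 + sqrt (u0 ^ 2 + c)).
Proof.
  intros h1 h2.
  assert (HS := pow2_sqrt (u0 ^ 2 + c)).
  assert (HS0 := sqrt_pos (u0 ^ 2 + c)).
  set (S := sqrt (u0 ^ 2 + c)) in *.
  assert (HS' : S ^ 2 = u0 ^ 2 + c) by (apply HS; nra).
  apply (Rmult_eq_reg_r (u0 + S)); [|lra]. unfold Rdiv; rewrite Rmult_assoc, Rinv_l; [nra|lra].
Qed.

Theorem mainTheorem7
  (kappa u0 Rm a gamma : R) (u du : R -> R)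
  (hkappa : 0 < kappa) (hu0 : 0 < u0) (hRm : 0 < Rm)
  (* u solves (u'/sqrt(1+u'^2))' = kappa u on [0, Rm), u(0) = u0, u'(0) = 0 *)
  (hderu : forall r, 0 < r < Rm -> is_derive u r (du r))
  (hode : forall r, 0 < r < Rm -> is_derive (sinpsi du) r (kappa * u r))
  (hu_0 : u 0 = u0) (hdu_0 : du 0 = 0)
  (hu_cont0 : filterlim u (at_right 0) (locally u0))
  (hdu_cont0 : filterlim du (at_right 0) (locally 0))
  (* maximality of [0, Rm): u' -> +oo as r -> Rm *)
  (hmax : filterlim du (at_left Rm) (Rbar_locally p_infty))
  (ha : 0 < a <= Rm) (hgamma : 0 <= gamma < PI / 2)
  (* contact angle gamma at the wall x = a: sin psi(a) = cos gamma,
     with sin psi extended continuously to r = a (needed when a = Rm) *)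
  (hcontact_in : a < Rm -> sinpsi du a = cos gamma)
  (hcontact_end : a = Rm -> filterlim (sinpsi du) (at_left Rm) (locally (cos gamma))) :
  let c := 2 / kappa * (1 - sin gamma) in
  let q := c / (u0 + sqrt (u0 ^ 2 + c)) in
  (a < Rm -> u a - u 0 = q) /\
  (a = Rm -> filterlim u (at_left Rm) (locally (u 0 + q))) /\
  q < sqrt c.
Proof.
  intros c q.
  set (s := sinpsi du).
  assert (Hs : forall r, 0 < 1 - s r ^ 2 /\ sqrt (1 - s r ^ 2) = / sqrt (1 + du r ^ 2)).
  { intro r. apply sp_facts. }
  set (F := fun r => kappa / 2 * u r ^ 2 + sqrt (1 - s r ^ 2)).
  assert (HdF : forall r, 0 < r < Rm -> is_derive F r 0).
  { intros r Hr.
    assert (H1 := is_derive_scal _ _ (kappa / 2) _ (is_derive_pow u 2 r _ (hderu r Hr))).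
    assert (H2 := is_derive_sqrt _ r _ (is_derive_minus (fun _ => 1) (fun t => s t ^ 2) r _ _
       (is_derive_const 1 r) (is_derive_pow s 2 r _ (hode r Hr))) (proj1 (Hs r))).
    assert (H3 := is_derive_plus _ _ r _ _ H1 H2).
    simpl in H3. unfold plus, minus, zero, opp in H3; simpl in H3.
    eapply (fun l (h : is_derive F r l) (e : l = 0) => eq_ind l (is_derive F r) h 0 e).
    { eapply is_derive_ext; [|apply H3]. intro t; reflexivity. }
    destruct (Hs r) as [Hp Hq]. unfold plus; simpl.
    replace (sqrt (1 + - (s r * (s r * 1)))) with (/ sqrt (1 + du r ^ 2))
      by (rewrite <- Hq; f_equal; ring).
    assert (Hw : 0 < sqrt (1 + du r ^ 2)) by (apply sqrt_lt_R0; nra).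
    unfold s, sinpsi. field. lra. }
  assert (Hconst : forall r1 r2, 0 < r1 < Rm -> 0 < r2 < Rm -> F r1 = F r2).
  { intros r1 r2 h1 h2. destruct (Rtotal_order r1 r2) as [l|[e|g]].
    - apply eq_is_derive; [intros t ht; apply HdF; lra | lra].
    - subst; reflexivity.
    - symmetry; apply eq_is_derive; [intros t ht; apply HdF; lra | lra]. }
  assert (HlimF : filterlim F (at_right 0) (locally (kappa / 2 * u0 ^ 2 + 1))).
  { set (g1 := fun y => kappa / 2 * y ^ 2).
    set (g2 := fun x => sqrt (1 - (x / sqrt (1 + x ^ 2)) ^ 2)).
    assert (L1 : filterlim (fun t => g1 (u t)) (at_right 0) (locally (g1 u0))).
    { eapply filterlim_comp; [apply hu_cont0|]. apply (@ex_derive_continuous R_AbsRing R_NormedModule).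
      unfold g1; auto_derive; auto. }
    assert (L2 : filterlim (fun t => g2 (du t)) (at_right 0) (locally (g2 0))).
    { eapply filterlim_comp; [apply hdu_cont0|]. unfold g2. apply (continuous_sqrt_comp (fun x => 1 - (x / sqrt (1 + x ^ 2)) ^ 2)).
      apply (@ex_derive_continuous R_AbsRing R_NormedModule). auto_derive. rewrite !Rmult_0_l, Rplus_0_r, sqrt_1. split; [lra|split; [lra|exact I]]. }
    replace (g2 0) with 1 in L2.
    2:{ unfold g2. unfold Rdiv; rewrite Rmult_0_l. replace (1 - 0 ^ 2) with 1 by ring.
        rewrite sqrt_1; reflexivity. }
    apply filterlim_ext with (f := fun t => Rplus (g1 (u t)) (g2 (du t))).
    { intro; reflexivity. }
    apply (filterlim_comp_2 _ _ Rplus L1 L2).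
    exact (@filterlim_plus _ R_NormedModule (g1 u0) 1). }
  assert (HFval : forall r, 0 < r < Rm -> F r = kappa / 2 * u0 ^ 2 + 1).
  { intros r hr. apply (@lim_unique_const _ (at_right_proper_filter 0) F); [|exact HlimF].
    exists (mkposreal r (proj1 hr)). intros y hy hy0. apply Hconst; [|lra]. split; [lra|].
    unfold ball in hy; simpl in hy; unfold AbsRing_ball, abs, minus, plus, opp in hy; simpl in hy.
    apply Rabs_def2 in hy. lra. }
  assert (Hk : kappa <> 0) by lra.
  assert (Hsq : forall r, 0 < r < Rm -> u r ^ 2 = u0 ^ 2 + 2 / kappa * (1 - sqrt (1 - s r ^ 2))).
  { intros r hr. assert (h := HFval r hr). unfold F in h.
    assert (E : u r ^ 2 = 2 / kappa * (kappa / 2 * u r ^ 2)) by (field; lra).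
    rewrite E. replace (kappa / 2 * u r ^ 2) with (kappa / 2 * u0 ^ 2 + 1 - sqrt (1 - s r ^ 2)) by lra.
    field. lra. }
  assert (Hge : forall r, 0 < r < Rm -> u0 ^ 2 <= u r ^ 2).
  { intros r hr. rewrite (Hsq r hr).
    assert (sqrt (1 - s r ^ 2) <= 1).
    { assert (H0 := pow2_ge_0 (s r)). apply Rle_trans with (sqrt 1); [apply sqrt_le_1_alt; lra | rewrite sqrt_1; lra]. }
    assert (0 < 2 / kappa) by (apply Rdiv_lt_0_compat; lra). nra. }
  assert (Hpos : forall r, 0 < r < Rm -> 0 < u r).
  { intros r hr. destruct (Rlt_or_le 0 (u r)) as [h|h]; auto. exfalso.
    assert (hlt : u r < 0) by (assert (H := Hge r hr); nra).
    assert (Hev : at_right 0 (fun t => 0 < t < r /\ 0 < u t)).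
    { apply filter_and.
      - exists (mkposreal r (proj1 hr)). intros y hy hy0.
        unfold ball in hy; simpl in hy; unfold AbsRing_ball, abs, minus, plus, opp in hy; simpl in hy.
        apply Rabs_def2 in hy. lra.
      - apply filterlim_locally with (eps := mkposreal u0 hu0) in hu_cont0.
        eapply filter_imp; [|exact hu_cont0]. intros x hx.
        unfold ball in hx; simpl in hx; unfold AbsRing_ball, abs, minus, plus, opp in hx; simpl in hx.
        apply Rabs_def2 in hx. lra. }
    destruct (Hierarchy.filter_ex _ Hev) as [t [ht hut]].
    destruct (Ranalysis5.IVT_interv (fun x => - u x) t r) as [z [hz hz0]].
    - intros b hb. apply continuity_pt_opp. apply continuity_pt_filterlim.
      apply (@ex_derive_continuous R_AbsRing R_NormedModule). exists (du b). apply hderu. lra.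
    - lra.
    - lra.
    - lra.
    - assert (H := Hge z ltac:(lra)). nra. }
  assert (HPI := PI_RGT_0).
  assert (Hsin1 : 0 <= sin gamma < 1).
  { assert (0 <= sin gamma) by (apply sin_ge_0; lra).
    assert (0 < cos gamma) by (apply cos_gt_0; lra).
    assert (H2 := sin2_cos2 gamma). unfold Rsqr in H2. split; [lra|nra]. }
  assert (Hc : 0 < c).
  { unfold c; apply Rmult_lt_0_compat; [apply Rdiv_lt_0_compat|]; lra. }
  assert (Hcs : 1 - cos gamma ^ 2 = sin gamma ^ 2).
  { assert (H2 := sin2_cos2 gamma). unfold Rsqr in H2. simpl. lra. }
  split; [|split].
  - intros hlt. assert (ha' : 0 < a < Rm) by lra.
    assert (Hsin : sqrt (1 - s a ^ 2) = sin gamma).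
    { unfold s; rewrite hcontact_in by lra. rewrite Hcs. apply sqrt_pow2. lra. }
    assert (Hua : u a = sqrt (u0 ^ 2 + c)).
    { rewrite <- (sqrt_pow2 (u a)) by (left; apply Hpos; lra). f_equal.
      rewrite (Hsq a ha'), Hsin. reflexivity. }
    rewrite Hua, hu_0. apply alg; lra.
  - intros heq.
    set (k := fun y => sqrt (u0 ^ 2 + 2 / kappa * (1 - sqrt (1 - y ^ 2)))).
    apply filterlim_ext_loc with (f := fun t => k (s t)).
    { exists (mkposreal Rm hRm). intros y hy hylt.
      unfold ball in hy; simpl in hy; unfold AbsRing_ball, abs, minus, plus, opp in hy; simpl in hy.
      apply Rabs_def2 in hy.
      unfold k. rewrite <- (Hsq y) by lra. apply sqrt_pow2; left; apply Hpos; lra. }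
    replace (u 0 + q) with (k (cos gamma)).
    { eapply filterlim_comp; [apply hcontact_end; exact heq|]. unfold k.
      apply (continuous_sqrt_comp (fun y => u0 ^ 2 + 2 / kappa * (1 - sqrt (1 - y ^ 2)))).
      apply (continuous_comp (fun y => sqrt (1 - y ^ 2)) (fun z => u0 ^ 2 + 2 / kappa * (1 - z))).
      - apply (continuous_sqrt_comp (fun y => 1 - y ^ 2)). apply (@ex_derive_continuous R_AbsRing R_NormedModule). auto_derive. auto.
      - apply (@ex_derive_continuous R_AbsRing R_NormedModule). auto_derive. auto. }
    unfold k. rewrite Hcs. rewrite sqrt_pow2 by lra. rewrite hu_0. unfold q.
    rewrite <- alg by lra. unfold c. ring.
  - unfold q.
    assert (hS : sqrt c < sqrt (u0 ^ 2 + c)) by (apply sqrt_lt_1_alt; nra).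
    assert (hc2 : sqrt c * sqrt c = c) by (apply sqrt_sqrt; lra).
    assert (hsc : 0 < sqrt c) by (apply sqrt_lt_R0; lra).
    unfold Rdiv. apply (Rmult_lt_reg_r (u0 + sqrt (u0 ^ 2 + c))); [lra|].
    rewrite Rmult_assoc, Rinv_l by lra. nra.
Qed.
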